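(* Let $n\ge 5$ and let $L$ be a Latin square of order $n$ with horizontal and vertical difference matrices $H=(h_{i,j})$ and $V=(v_{i,j})$. If rows $i$ and $i+1$ of $H$ are equal, then all entries of row $i$ of $V$ are equal. If columns $j$ and $j+1$ of $V$ are equal, then all entries of column $j$ of $H$ are equal. Moreover, $L$ is a row product if and only if every row of $H$ equals the first row of $H$, which holds if and only if every column of $V$ equals the first column of $V$.
   Context: Symbols are $[1,n]$. A Latin square of order $n$ is an $n\times n$ matrix $(m_{i,j})$ over $[1,n]$ with each symbol exactly once in every row and column. $H$ is the $n\times(n-1)$ matrix with $h_{i,j}\in[0,n-1]$, $h_{i,j}\equiv m_{i,j+1}-m_{i,j}\pmod n$; $V$ is the $(n-1)\times n$ matrix with $v_{i,j}\in[0,n-1]$, $v_{i,j}\equiv m_{i+1,j}-m_{i,j}\pmod n$. The difference row of a Latin row $(s_1,\dots,s_n)$ is $(h_1,\dots,h_{n-1})$ with $h_j\equiv s_{j+1}-s_j\pmod n$. A row product is a Latin square obtained by adding a constant mod $n$ to all entries of $\mathrm{prod}(d,d')$, the $n\times n$ matrix with $1$ in cell $(1,1)$ whose horizontal difference matrix has every row equal to a difference row $d$ and whose vertical difference matrix has every column equal to a difference row $d'$. *)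

(* Defs.v *)
From mathcomp Require Import all_boot.
Set Implicit Arguments. Unset Strict Implicit. Unset Printing Implicit Defensive.

(* Conventions: rows/columns are indexed 0..n-1 (paper: 1..n); symbols are
   the naturals 1..n.  A square / row is a function on nat; only the
   entries with indices < n matter. *)

Definition latin_row (n : nat) (s : nat -> nat) : Prop :=
  (forall j, j < n -> 1 <= s j <= n) /\
  (forall x, 1 <= x <= n -> exists j, j < n /\ s j = x /\
       forall k, k < n -> s k = x -> k = j).

Definition latin_square (n : nat) (L : nat -> nat -> nat) : Prop :=
  (forall i, i < n -> latin_row n (fun j => L i j)) /\
  (forall j, j < n -> latin_row n (fun i => L i j)).

(* Residue of a - b mod n in [0, n-1] (valid for b <= n). *)
Definition dmod (n a b : nat) : nat := (a + n - b) %% n.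

(* Horizontal difference matrix: n x (n-1), H i j for i < n, j < n-1. *)
Definition Hdiff (n : nat) (L : nat -> nat -> nat) (i j : nat) : nat :=
  dmod n (L i j.+1) (L i j).

(* Vertical difference matrix: (n-1) x n, V i j for i < n-1, j < n. *)
Definition Vdiff (n : nat) (L : nat -> nat -> nat) (i j : nat) : nat :=
  dmod n (L i.+1 j) (L i j).

Definition difference_row (n : nat) (d : nat -> nat) : Prop :=
  exists s, latin_row n s /\
    forall j, j < n.-1 -> d j = dmod n (s j.+1) (s j).

Definition is_prod (n : nat) (d d' : nat -> nat) (P : nat -> nat -> nat) : Prop :=
  (forall i j, i < n -> j < n -> 1 <= P i j <= n) /\
  P 0 0 = 1 /\
  (forall i j, i < n -> j < n.-1 -> Hdiff n P i j = d j) /\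
  (forall i j, i < n.-1 -> j < n -> Vdiff n P i j = d' i).

Definition row_product (n : nat) (L : nat -> nat -> nat) : Prop :=
  exists d d' P c, difference_row n d /\ difference_row n d' /\
    is_prod n d d' P /\
    forall i j, i < n -> j < n -> L i j = P i j + c %[mod n].

(* Main.v *)
Require Import Defs.
From mathcomp Require Import all_boot all_algebra ring zify.
Import GRing.Theory.
Set Implicit Arguments. Unset Strict Implicit.

Definition fz (p x : nat) : 'Z_p := (x%:R)%R.

Lemma fz_n p : 1 < p -> fz p p = 0%R.
Proof. by move=> Hp; rewrite /fz -(Zp_nat_mod Hp) modnn. Qed.

Lemma fz_add p x y : fz p (x + y) = (fz p x + fz p y)%R.
Proof. by rewrite /fz natrD. Qed.

Lemma fz_dmod p a b : 1 < p -> b <= p -> fz p (dmod p a b) = (fz p a - fz p b)%R.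
Proof.
move=> Hp Hb; rewrite /fz /dmod Zp_nat_mod // natrB; last first.
  by apply: leq_trans Hb (leq_addl _ _).
by rewrite natrD -/(fz p p) fz_n // GRing.addr0.
Qed.

Lemma fz_mod p x y : 1 < p -> fz p x = fz p y -> x = y %[mod p].
Proof. move=> Hp; rewrite /fz => E; have := congr1 (@nat_of_ord _) E. by rewrite !val_Zp_nat. Qed.

Lemma fz_inj p x y : 1 < p -> x < p -> y < p -> fz p x = fz p y -> x = y.
Proof. by move=> Hp Hx Hy /(fz_mod Hp); rewrite !modn_small. Qed.

Lemma dmod_lt p a b : 0 < p -> dmod p a b < p.
Proof. by move=> Hp; rewrite /dmod ltn_mod. Qed.

Lemma sub_trick (R : comNzRingType) (a0 a1 b0 b1 : R) :
  (a1 - a0 = b1 - b0)%R -> (b1 - a1 = b0 - a0)%R.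
Proof.
move=> E; apply/eqP; rewrite -GRing.subr_eq0.
have -> : (b1 - a1 - (b0 - a0) = (b1 - b0) - (a1 - a0))%R by ring.
by rewrite E GRing.subrr.
Qed.

Lemma rows_eq p L i : 1 < p -> (forall i j, i < p -> j < p -> L i j <= p) ->
  i.+1 < p -> (forall j, j < p.-1 -> Hdiff p L i j = Hdiff p L i.+1 j) ->
  forall j, j < p -> Vdiff p L i j = Vdiff p L i 0.
Proof.
move=> Hp B Hi HH; elim=> // j IH Hj; rewrite -IH; last by lia.
have Hp0 : 0 < p by lia.
apply: (fz_inj Hp); rewrite /Vdiff ?dmod_lt //.
rewrite !fz_dmod //; try (apply: B; lia).
apply: sub_trick; rewrite -!fz_dmod; try (apply: B; lia); try done.
by congr fz; apply: HH; lia.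
Qed.

Lemma latin_bound n L : latin_square n L -> forall i j, i < n -> j < n -> 1 <= L i j <= n.
Proof. by case=> HR _ i j Hi Hj; case: (HR i Hi) => /(_ j Hj). Qed.

Lemma H_to_V p L : 1 < p -> (forall i j, i < p -> j < p -> L i j <= p) ->
  (forall i j, i < p -> j < p.-1 -> Hdiff p L i j = Hdiff p L 0 j) ->
  (forall i j, i < p.-1 -> j < p -> Vdiff p L i j = Vdiff p L i 0).
Proof.
move=> Hp B HH i j Hi Hj; apply: rows_eq => //; first lia.
move=> k Hk; rewrite HH ?HH //; lia.
Qed.

Lemma Hdiff_shift p L P c : 1 < p -> (forall i j, i < p -> j < p -> L i j <= p) ->
  (forall i j, i < p -> j < p -> P i j <= p) ->
  (forall i j, i < p -> j < p -> L i j = P i j + c %[mod p]) ->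
  (forall i j, i < p -> j < p.-1 -> Hdiff p L i j = Hdiff p P i j) /\
  (forall i j, i < p.-1 -> j < p -> Vdiff p L i j = Vdiff p P i j).
Proof.
move=> Hp BL BP E.
have Hp0 : 0 < p by lia.
have F : forall i j, i < p -> j < p -> fz p (L i j) = (fz p (P i j) + fz p c)%R.
  move=> i j Hi Hj; rewrite -fz_add /fz -(Zp_nat_mod Hp) E // Zp_nat_mod //.
split=> i j Hi Hj; apply: (fz_inj Hp); rewrite ?dmod_lt //;
  rewrite !fz_dmod; try (first [apply: BL | apply: BP]; lia); try done;
  rewrite !F; try lia; ring.
Qed.

Theorem mainTheorem15 (n : nat) (L : nat -> nat -> nat) :
  5 <= n -> latin_square n L ->
  (* rows i and i+1 of H equal ==> row i of V constant *)
  (forall i, i.+1 < n ->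
     (forall j, j < n.-1 -> Hdiff n L i j = Hdiff n L i.+1 j) ->
     forall j k, j < n -> k < n -> Vdiff n L i j = Vdiff n L i k) /\
  (* columns j and j+1 of V equal ==> column j of H constant *)
  (forall j, j.+1 < n ->
     (forall i, i < n.-1 -> Vdiff n L i j = Vdiff n L i j.+1) ->
     forall i k, i < n -> k < n -> Hdiff n L i j = Hdiff n L k j) /\
  (row_product n L <->
     (forall i j, i < n -> j < n.-1 -> Hdiff n L i j = Hdiff n L 0 j)) /\
  ((forall i j, i < n -> j < n.-1 -> Hdiff n L i j = Hdiff n L 0 j) <->
     (forall i j, i < n.-1 -> j < n -> Vdiff n L i j = Vdiff n L i 0)).
Proof.
move=> H5 LS.
have Hp : 1 < n by lia.
have Hp0 : 0 < n by lia.
have B := latin_bound LS.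
have B' : forall i j, i < n -> j < n -> L i j <= n.
  by move=> i j Hi Hj; case/andP: (B i j Hi Hj).
have BT : forall i j, i < n -> j < n -> (fun a b => L b a) i j <= n.
  by move=> i j Hi Hj; apply: B'.
split.
  move=> i Hi HH j k Hj Hk.
  by rewrite (rows_eq Hp B' Hi HH Hj) (rows_eq Hp B' Hi HH Hk).
split.
  move=> j Hj HH i k Hi Hk.
  have E := @rows_eq n (fun a b => L b a) j Hp BT Hj HH.
  by have := E i Hi; have := E k Hk; rewrite /Vdiff /Hdiff => -> ->.
split; last first.
  split; first exact: H_to_V.
  move=> HV i j Hi Hj.
  exact: (@H_to_V n (fun a b => L b a) Hp BT (fun a b Ha Hb => HV b a Hb Ha) j i Hj Hi).
split.
  case=> d [d' [P [c [_ [_ [[BP [_ [HP _]]] EL]]]]]].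
  have BP' : forall i j, i < n -> j < n -> P i j <= n.
    by move=> i j Hi Hj; case/andP: (BP i j Hi Hj).
  case: (Hdiff_shift Hp B' BP' EL) => S1 _ i j Hi Hj.
  by rewrite S1 // HP // -(HP 0) // -S1.
move=> HH.
pose P := fun i j => (dmod n (L i j) (L 0 0)).+1.
have BP' : forall i j, i < n -> j < n -> P i j <= n.
  by move=> i j _ _; rewrite /P dmod_lt.
have EL : forall i j, i < n -> j < n -> L i j = P i j + (L 0 0 + n - 1) %[mod n].
  move=> i j Hi Hj; apply: (fz_mod Hp).
  have L00 : 1 <= L 0 0 by case/andP: (B 0 0 Hp0 Hp0).
  have -> : P i j + (L 0 0 + n - 1) = dmod n (L i j) (L 0 0) + L 0 0 + n by rewrite /P; lia.
  rewrite !fz_add fz_n // fz_dmod //; last exact: B'.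
  ring.
case: (Hdiff_shift Hp B' BP' EL) => S1 S2.
exists (fun j => Hdiff n L 0 j), (fun i => Vdiff n L i 0), P, (L 0 0 + n - 1).
split.
  exists (fun j => L 0 j); split => //; exact: (LS.1 0 Hp0).
split.
  exists (fun i => L i 0); split => //; exact: (LS.2 0 Hp0).
split=> //.
split.
  by move=> i j Hi Hj; rewrite /P /= dmod_lt.
split.
  by rewrite /P /dmod addKn modnn.
split.
  by move=> i j Hi Hj; rewrite -S1 // HH.
by move=> i j Hi Hj; rewrite -S2 // (H_to_V Hp B' HH).
Qed.
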